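(* Let ${\mathbf X} \in \mathbb{R}^{n \times d}$ be a matrix each of whose rows has Euclidean norm at most $1$, let $\gamma > 0$, and let ${\mathbf X}^*$ be the $\gamma$-smoothed version of ${\mathbf X}$ (defined in the context). Then the leverage scores of ${\mathbf X}^*$ satisfy $\ell_j({\mathbf X}^* ) \le 1/\gamma$ for all $j \in [n]$.
   Context: Write the singular value decomposition ${\mathbf X} = \sum_{k} \sigma_k u_k v_k^T$ with singular values $\sigma_k > 0$. The $\gamma$-smoothed matrix is ${\mathbf X}^* = \sum_{k : \sigma_k \ge \sqrt{\gamma}} \sigma_k u_k v_k^T$, i.e. obtained by discarding all singular values smaller than $\sqrt{\gamma}$. For a matrix ${\mathbf A} \in \mathbb{R}^{n\times d}$ with $j$-th row ${\mathbf A}[j,:]$, the $j$-th leverage score is $\ell_j({\mathbf A}) = {\mathbf A}[j,:]^T ({\mathbf A}^T {\mathbf A})^{+} {\mathbf A}[j,:]$, where $(\cdot)^+$ denotes the Moore–Penrose pseudoinverse. *)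

(* Defs.v *)
From HB Require Import structures.
From mathcomp Require Import all_boot all_order all_algebra.
From mathcomp Require Import boolp classical_sets reals.
Set Implicit Arguments. Unset Strict Implicit. Unset Printing Implicit Defensive.
Import Order.TTheory GRing.Theory Num.Theory.
Local Open Scope ring_scope.

Definition is_pinv (R : realType) (m n : nat) (A : 'M[R]_(m, n)) (B : 'M[R]_(n, m)) : Prop :=
  [/\ A *m B *m A = A, B *m A *m B = B,
      (A *m B)^T = A *m B & (B *m A)^T = B *m A].

(* The Moore-Penrose pseudoinverse (exists and is unique; chosen classically). *)
Definition pinv (R : realType) (m n : nat) (A : 'M[R]_(m, n)) : 'M[R]_(n, m) :=
  xget 0 (is_pinv A).

Definition leverage (R : realType) (n d : nat) (A : 'M[R]_(n, d)) (j : 'I_n) : R :=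
  (row j A *m pinv (A^T *m A) *m (row j A)^T) 0 0.

Definition is_svd (R : realType) (n d r : nat) (X : 'M[R]_(n, d))
    (s : 'I_r -> R) (U : 'M[R]_(n, r)) (V : 'M[R]_(d, r)) : Prop :=
  [/\ forall k, 0 < s k, U^T *m U = 1%:M, V^T *m V = 1%:M &
      X = \sum_(k < r) s k *: (col k U *m (col k V)^T)].

Definition smoothed (R : realType) (n d r : nat) (gamma : R)
    (s : 'I_r -> R) (U : 'M[R]_(n, r)) (V : 'M[R]_(d, r)) : 'M[R]_(n, d) :=
  \sum_(k < r | Num.sqrt gamma <= s k) s k *: (col k U *m (col k V)^T).

(* Main.v *)
Require Import Defs.
From HB Require Import structures.
From mathcomp Require Import all_boot all_order all_algebra.
From mathcomp Require Import boolp classical_sets reals.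
From mathcomp Require Import ring.
Import Order.TTheory GRing.Theory Num.Theory.
Local Open Scope ring_scope.

Lemma diagM (R : comPzRingType) (r : nat) (a b : 'rV[R]_r) :
  diag_mx a *m diag_mx b = diag_mx (\row_k (a 0 k * b 0 k)).
Proof.
apply/matrixP => i j; rewrite mul_diag_mx !mxE.
by case: (i == j); rewrite ?mulr1n ?mulr0n ?mulr0.
Qed.

Lemma svd_sum (R : comPzRingType) (n d r : nat) (U : 'M[R]_(n, r)) (V : 'M[R]_(d, r))
  (a : 'rV[R]_r) :
  U *m diag_mx a *m V^T = \sum_(k < r) a 0 k *: (col k U *m (col k V)^T).
Proof.
rewrite mul_mx_diag; apply/matrixP => i j; rewrite summxE !mxE; apply: eq_bigr => k _.
rewrite !mxE big_ord1 !mxE; ring.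
Qed.

Lemma quad_diag (R : comPzRingType) (r : nat) (x : 'rV[R]_r) (a : 'rV[R]_r) :
  (x *m diag_mx a *m x^T) 0 0 = \sum_k x 0 k * a 0 k * x 0 k.
Proof.
rewrite mul_mx_diag !mxE; apply: eq_bigr => k _; rewrite !mxE; ring.
Qed.

Lemma sand (R : comPzRingType) (m r q p : nat) (L : 'M[R]_(m, r)) (W : 'M[R]_(r, q))
  (V : 'M[R]_(q, r)) (Rt : 'M[R]_(r, p)) (a b : 'rV[R]_r) :
  W *m V = 1%:M ->
  L *m diag_mx a *m W *m (V *m diag_mx b *m Rt) = L *m diag_mx (\row_k (a 0 k * b 0 k)) *m Rt.
Proof.
move=> HV; rewrite -!mulmxA (mulmxA W) HV mul1mx (mulmxA (diag_mx a)) diagM.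
by rewrite !mulmxA.
Qed.

Theorem mainTheorem2 (R : realType) (n d : nat) (X : 'M[R]_(n, d)) (gamma : R)
    (r : nat) (s : 'I_r -> R) (U : 'M[R]_(n, r)) (V : 'M[R]_(d, r)) :
  (forall i : 'I_n, \sum_(j < d) X i j ^+ 2 <= 1) ->
  0 < gamma ->
  is_svd X s U V ->
  forall j : 'I_n, leverage (smoothed gamma s U V) j <= gamma^-1.
Proof.
move=> Hrow Hg [Hs HU HV HX] j.
pose S k := Num.sqrt gamma <= s k.
pose d1 : 'rV[R]_r := \row_k (if S k then s k else 0).
pose d2 : 'rV[R]_r := \row_k (if S k then (s k)^-1 else 0).
pose p : 'rV[R]_r := \row_k (if S k then 1 else 0).
pose ds : 'rV[R]_r := \row_k (s k).
have sk0 k : s k != 0 by rewrite gt_eqF ?Hs.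
have HA : smoothed gamma s U V = U *m diag_mx d1 *m V^T.
  rewrite svd_sum /smoothed big_mkcond /=; apply: eq_bigr => k _.
  by rewrite !mxE /S; case: ifP; rewrite ?scale0r.
have HXd : X = U *m diag_mx ds *m V^T.
  by rewrite svd_sum HX; apply: eq_bigr => k _; rewrite mxE.
set A := smoothed gamma s U V.
pose M := A^T *m A.
have HM : M = V *m diag_mx (\row_k (d1 0 k * d1 0 k)) *m V^T.
  rewrite /M /A HA !trmx_mul trmxK tr_diag_mx (mulmxA V).
  by rewrite sand.
pose B := V *m diag_mx (\row_k (d2 0 k * d2 0 k)) *m V^T.
have Hex : exists B0, is_pinv M B0.
  exists B; split => //.
  - rewrite HM /B !sand //; congr (_ *m diag_mx _ *m _).
    apply/rowP => k; rewrite !mxE; case: ifP => _; last by rewrite !mulr0.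
    by field.
  - rewrite HM /B !sand //; congr (_ *m diag_mx _ *m _).
    apply/rowP => k; rewrite !mxE; case: ifP => _; last by rewrite !mulr0.
    by field.
  - by rewrite HM /B sand // !trmx_mul trmxK tr_diag_mx mulmxA.
  - by rewrite HM /B sand // !trmx_mul trmxK tr_diag_mx mulmxA.
have HP : is_pinv M (pinv M) by apply: xgetPex.
case: HP => HP1 _ _ _.
rewrite /leverage -/M.
pose c := row j U *m diag_mx d2 *m V^T.
have Ha : row j A = c *m M.
  rewrite HM /c sand // /A HA !row_mul.
  congr (_ *m diag_mx _ *m _); apply/rowP => k; rewrite !mxE.
  case: ifP => _; last by rewrite !mulr0.
  by field.
have HMt : M^T = M by rewrite /M trmx_mul trmxK.
have -> : row j A *m pinv M *m (row j A)^T = row j A *m c^T.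
  rewrite Ha trmx_mul HMt.
  have -> : c *m M *m pinv M *m (M *m c^T) = c *m (M *m pinv M *m M) *m c^T by rewrite !mulmxA.
  by rewrite HP1.
have -> : row j A *m c^T = row j U *m diag_mx p *m (row j U)^T.
  rewrite /A HA !row_mul /c !trmx_mul trmxK tr_diag_mx (mulmxA V) sand //.
  congr (_ *m diag_mx _ *m _).
  apply/rowP => k; rewrite !mxE; case: ifP => _; last by rewrite !mulr0.
  by field.
rewrite quad_diag.
have Hj := Hrow j.
have Hx : \sum_(j0 < d) X j j0 ^+ 2 = (row j X *m (row j X)^T) 0 0.
  by rewrite !mxE; apply: eq_bigr => k _; rewrite !mxE expr2.
rewrite Hx HXd !row_mul !trmx_mul trmxK tr_diag_mx (mulmxA V) sand // quad_diag in Hj.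
have Hg' : 0 < gamma^-1 by rewrite invr_gt0.
apply: (le_trans (y := gamma^-1 * \sum_k row j U 0 k * (\row_k (ds 0 k * ds 0 k)) 0 k * row j U 0 k)); last first.
  by rewrite -[leRHS]mulr1 ler_wpM2l // ltW.
rewrite mulr_sumr; apply: ler_sum => k _; rewrite !mxE.
case: ifP => HS; last first.
  rewrite mulr0 mul0r; apply: mulr_ge0; first exact: ltW.
  by rewrite mulrAC; apply: mulr_ge0; rewrite -expr2 sqr_ge0.
have Hsq : gamma <= s k * s k.
  have h0 : 0 <= Num.sqrt gamma by apply: sqrtr_ge0.
  rewrite -[gamma](sqr_sqrtr (ltW Hg)) expr2.
  by apply: ler_pM.
have h1 : 1 <= gamma^-1 * (s k * s k).
  by rewrite ler_pdivlMl // mulr1.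
rewrite mulr1 mulrAC mulrCA -[leLHS]mulr1 ler_wpM2l // -expr2 sqr_ge0 //.
Qed.
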